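(* Assume $\sigma_1(x)=\tfrac12\sigma_1''(0)(x-a_1)(x-b_1)$ and $\sigma_2(x)=\tfrac12\sigma_2''(0)(x-a_2)(x-b_2)$ with $\sigma_1''(0)\ne0$, $\sigma_2''(0)\ne0$ and real zeros satisfying $a_2<0<a_1<b_2<b_1$, and assume $q^2\Lambda_q<0$, where $\Lambda_q=q^{-2}\Big[1+\frac{(1-q^{-1})\tau'(0)}{\frac12\sigma_1''(0)}\Big]$. Put $a=b_2$ and $b=q^{-1}b_1$, and suppose $q^{-N-1}a=b$ for some $N\in\mathbb{N}_0$. Let $$\rho(x)=|x|^{\iota}\frac{(qa/x,\,x/b;q)_\infty}{(a_1/x,\,x/a_2;q)_\infty},\qquad q^{\iota}=\frac{q^{-3}\sigma_2''(0)a_2}{\sigma_1''(0)b}.$$ Then there exist polynomials $P_0,\dots,P_N$, with $P_n$ of degree $n$ a solution of the q-EHT with $\lambda=\lambda_n$, and nonzero constants $d_n^2$, such that for $m,n\in\{0,\dots,N\}$ $$\int_a^{b}P_n(x)P_m(x)\rho(x)\,d_{q^{-1}}x=d_n^2\delta_{mn},$$ i.e. the $P_n$ are orthogonal with respect to $\rho$ supported on $\{q^{-k}a\}_{k=0}^N$.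
   Context: Throughout $0<q<1$. For a function $y$ and $\zeta\in\{q,q^{-1}\}$, $D_\zeta y(x)=\frac{y(x)-y(\zeta x)}{(1-\zeta)x}$ for $x\ne0$ and $D_\zeta y(0)=y'(0)$; $[n]_q=\frac{1-q^n}{1-q}$. Let $\sigma_1$ be a real polynomial of degree at most two, $\tau(x)=\tau'(0)x+\tau(0)$ a real polynomial with $\tau'(0)\ne0$, and $\sigma_2(x):=q[\sigma_1(x)+(1-q^{-1})x\tau(x)]$. The q-EHT with parameter $n$ is $\sigma_1(x)D_{q^{-1}}D_qy(x)+\tau(x)D_qy(x)+\lambda_ny(x)=0$, $\lambda_n=-[n]_q\big(\tau'(0)+\tfrac12[n-1]_{q^{-1}}\sigma_1''(0)\big)$. $(\alpha;q)_\infty=\prod_{k\ge0}(1-\alpha q^k)$, $(\alpha_1,\dots,\alpha_r;q)_\infty=\prod_i(\alpha_i;q)_\infty$. For $q^{\iota}=c$ ($c\ne0$), $\iota$ is any complex number with $e^{\iota\ln q}=c$ and $|x|^{\iota}:=e^{\iota\ln|x|}$. For $a>0$ and $b=q^{-N-1}a$, $\int_a^{b}f(x)\,d_{q^{-1}}x=(q^{-1}-1)a\sum_{k=0}^{N}q^{-k}f(q^{-k}a)$. *)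

(* Defs.v *)
From Stdlib Require Import Reals ZArith.
From Coquelicot Require Import Coquelicot.
Open Scope R_scope.

Notation CC := Complex.C.

Definition qnum (z : R) (m : Z) : R := (1 - powerRZ z m) / (1 - z).

Definition Dq (zeta : R) (y : R -> R) (x : R) : R :=
  if Req_EM_T x 0 then Derive y 0
  else (y x - y (zeta * x)) / ((1 - zeta) * x).

Definition solves_qEHT (q : R) (sigma1 tau : R -> R) (lam : R) (y : R -> R) : Prop :=
  forall x : R,
    sigma1 x * Dq (/ q) (Dq q y) x + tau x * Dq q y x + lam * y x = 0.

(* lambda_n = -[n]_q (tau'(0) + 1/2 [n-1]_{q^-1} sigma1''(0)) *)
Definition lambda_n (q t1 s1 : R) (n : nat) : R :=
  - qnum q (Z.of_nat n) * (t1 + / 2 * qnum (/ q) (Z.of_nat n - 1) * s1).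

Fixpoint qpoch_fin (alpha q : R) (n : nat) : R :=
  match n with
  | O => 1
  | S m => qpoch_fin alpha q m * (1 - alpha * q ^ m)
  end.
Definition qpoch_inf (alpha q : R) : R := real (Lim_seq (qpoch_fin alpha q)).

Definition cpow_abs (x : R) (iota : CC) : CC :=
  Cmult (RtoC (exp (Re iota * ln (Rabs x))))
        (cos (Im iota * ln (Rabs x)), sin (Im iota * ln (Rabs x))).

Definition poly_eval (c : nat -> R) (n : nat) (x : R) : R :=
  sum_f_R0 (fun k => c k * x ^ k) n.
Definition has_degree (c : nat -> R) (n : nat) : Prop :=
  c n <> 0 /\ forall k, (n < k)%nat -> c k = 0.

Fixpoint csum (f : nat -> CC) (N : nat) : CC :=
  match N with
  | O => f O
  | S m => Cplus (csum f m) (f (S m))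
  end.

(* int_a^{q^{-N-1} a} f(x) d_{q^{-1}} x = (q^{-1}-1) a sum_{k=0}^N q^{-k} f(q^{-k} a) *)
Definition qint_inv (q a : R) (N : nat) (f : R -> CC) : CC :=
  Cmult (RtoC ((/ q - 1) * a))
        (csum (fun k => Cmult (RtoC (/ q ^ k)) (f (/ q ^ k * a))) N).

(* Main.v *)
Require Import Defs.
From Stdlib Require Import Reals ZArith Lra Lia Psatz FunctionalExtensionality.
From Coquelicot Require Import Coquelicot.
Open Scope R_scope.

Lemma exp_le' (x y : R) : x <= y -> exp x <= exp y.
Proof. intros [H|H]; [left; apply exp_increasing; auto| subst; lra]. Qed.

Lemma pow_le1 (x : R) (n : nat) : 0 <= x <= 1 -> x ^ n <= 1.
Proof. intros H; induction n; simpl; [lra|]. assert (0 <= x ^ n) by (apply pow_le; lra). nra. Qed.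

Lemma qpf_pos (al q : R) : 0 < q < 1 -> al < 1 -> forall n, 0 < qpoch_fin al q n.
Proof.
  intros Hq Ha n; induction n as [|n IH]; simpl; [lra|].
  apply Rmult_lt_0_compat; auto.
  destruct (Rle_lt_dec al 0).
  - assert (0 <= - al * q ^ n) by (apply Rmult_le_pos; [lra| apply pow_le; lra]). nra.
  - assert (q ^ n <= 1) by (apply pow_le1; lra). assert (0 <= q^n) by (apply pow_le; lra). nra.
Qed.

Lemma qp_lim (al q : R) : 0 < q < 1 -> al < 1 ->
  exists l, 0 < l /\ is_lim_seq (qpoch_fin al q) l.
Proof.
  intros Hq Ha.
  pose proof (qpf_pos al q Hq Ha) as Hp.
  destruct (Rle_lt_dec al 0) as [Hneg|Hpos].
  - assert (Hinc : forall n, qpoch_fin al q n <= qpoch_fin al q (S n)).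
    { intro n; simpl. specialize (Hp n).
      assert (0 <= - al * q ^ n) by (apply Rmult_le_pos; [lra| apply pow_le; lra]). nra. }
    assert (Hb : forall n, qpoch_fin al q n <= exp (- al * (1 - q ^ n) / (1 - q))).
    { induction n as [|n IH]; simpl.
      - replace (- al * (1 - 1) / (1 - q)) with 0 by (field; lra). rewrite exp_0; lra.
      - replace (- al * (1 - q * q ^ n) / (1 - q)) with (- al * (1 - q ^ n) / (1 - q) + (- al * q ^ n)) by (field; lra).
        rewrite exp_plus. apply Rmult_le_compat; auto.
        + left; apply Hp.
        + assert (0 <= - al * q ^ n) by (apply Rmult_le_pos; [lra| apply pow_le; lra]). nra.
        + pose proof (exp_ineq1_le (- al * q ^ n)). lra. }
    assert (Hb2 : forall n, qpoch_fin al q n <= exp (- al / (1 - q))).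
    { intro n. eapply Rle_trans; [apply Hb|]. apply exp_le'.
      assert (0 <= q ^ n) by (apply pow_le; lra).
      unfold Rdiv. apply Rmult_le_compat_r. left; apply Rinv_0_lt_compat; lra. nra. }
    destruct (ex_finite_lim_seq_incr _ _ Hinc Hb2) as [l Hl].
    exists l; split; auto.
    assert (H1 : Rbar_le 1 l).
    { apply (is_lim_seq_le (fun _ => 1) (qpoch_fin al q)); auto.
      - intro n; induction n; simpl; [lra|]. eapply Rle_trans; [apply IHn| apply Hinc].
      - apply is_lim_seq_const. }
    simpl in H1; lra.
  - assert (Hdec : forall n, qpoch_fin al q (S n) <= qpoch_fin al q n).
    { intro n; simpl. specialize (Hp n).
      assert (0 <= al * q ^ n) by (apply Rmult_le_pos; [lra| apply pow_le; lra]). nra. }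
    assert (Hb : forall n, exp (- al * (1 - q ^ n) / ((1 - q) * (1 - al))) <= qpoch_fin al q n).
    { induction n as [|n IH]; simpl.
      - replace (- al * (1 - 1) / ((1 - q) * (1 - al))) with 0 by (field; lra). rewrite exp_0; lra.
      - replace (- al * (1 - q * q ^ n) / ((1 - q) * (1 - al))) with
          (- al * (1 - q ^ n) / ((1 - q) * (1 - al)) + (- (al * q ^ n / (1 - al)))) by (field; lra).
        rewrite exp_plus. apply Rmult_le_compat; auto.
        + left; apply exp_pos.
        + left; apply exp_pos.
        + set (y := al * q ^ n).
          assert (Hy0 : 0 <= y) by (apply Rmult_le_pos; [lra| apply pow_le; lra]).
          assert (Hy1 : y <= al). { unfold y. assert (q ^ n <= 1) by (apply pow_le1; lra). nra. }
          rewrite exp_Ropp.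
          pose proof (exp_ineq1_le (y / (1 - al))) as He.
          assert (Hk : / (1 - y) <= 1 + y / (1 - al)).
          { apply (Rmult_le_reg_l (1 - y)); [lra|]. rewrite Rinv_r by lra.
            apply (Rmult_le_reg_l (1 - al)); [lra|].
            replace ((1 - al) * ((1 - y) * (1 + y / (1 - al)))) with ((1-y)*(1 - al + y)) by (field; lra).
            nra. }
          assert (0 < 1 + y / (1 - al)).
          { assert (0 <= y / (1 - al)) by (apply Rmult_le_pos; [lra| left; apply Rinv_0_lt_compat; lra]). lra. }
          replace (1 - y) with (/ / (1 - y)) by (rewrite Rinv_inv; reflexivity).
          apply Rinv_le_contravar. apply Rinv_0_lt_compat; lra. lra. }
    assert (Hb2 : forall n, exp (- al / ((1 - q) * (1 - al))) <= qpoch_fin al q n).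
    { intro n. eapply Rle_trans; [|apply Hb]. apply exp_le'.
      assert (0 <= q ^ n) by (apply pow_le; lra).
      unfold Rdiv. apply Rmult_le_compat_r. left; apply Rinv_0_lt_compat; nra. nra. }
    destruct (ex_finite_lim_seq_decr _ _ Hdec Hb2) as [l Hl].
    exists l; split; auto.
    assert (H1 : Rbar_le (exp (- al / ((1 - q) * (1 - al)))) l).
    { apply (is_lim_seq_le (fun _ => exp (- al / ((1 - q) * (1 - al)))) (qpoch_fin al q)); auto.
      apply is_lim_seq_const. }
    simpl in H1. pose proof (exp_pos (- al / ((1 - q) * (1 - al)))). lra.
Qed.

Lemma qp_pos (al q : R) : 0 < q < 1 -> al < 1 -> 0 < qpoch_inf al q.
Proof.
  intros Hq Ha. destruct (qp_lim al q Hq Ha) as [l [Hl Hl2]].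
  unfold qpoch_inf. rewrite (is_lim_seq_unique _ _ Hl2). simpl; auto.
Qed.

Lemma qp_fun (al q : R) : 0 < q < 1 -> al < 1 ->
  qpoch_inf al q = (1 - al) * qpoch_inf (al * q) q.
Proof.
  intros Hq Ha.
  assert (Ha' : al * q < 1) by (destruct (Rle_lt_dec al 0); nra).
  destruct (qp_lim (al*q) q Hq Ha') as [l [_ Hl]].
  assert (Hs : forall n, qpoch_fin al q (S n) = (1 - al) * qpoch_fin (al * q) q n).
  { induction n as [|n IH]; simpl; [ring|]. simpl in IH. rewrite IH. ring. }
  assert (Hl2 : is_lim_seq (qpoch_fin al q) ((1 - al) * l)).
  { apply is_lim_seq_incr_1.
    apply (is_lim_seq_ext (fun n => (1 - al) * qpoch_fin (al * q) q n)).
    { intro n; rewrite Hs; auto. }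
    apply (is_lim_seq_scal_l _ (1 - al) l). auto. }
  unfold qpoch_inf. rewrite (is_lim_seq_unique _ _ Hl2), (is_lim_seq_unique _ _ Hl). simpl; auto.
Qed.

Lemma pe_S c n x : poly_eval c (S n) x = poly_eval c n x + c (S n) * x ^ (S n).
Proof. reflexivity. Qed.

Lemma pe_deg c n : (forall k, (n < k)%nat -> c k = 0) ->
  forall m x, (n <= m)%nat -> poly_eval c m x = poly_eval c n x.
Proof.
  intros Hc m x Hm. induction Hm; auto.
  rewrite pe_S, IHHm, Hc by lia. ring.
Qed.

Definition qd (z : R) (c : nat -> R) (k : nat) : R := c (S k) * ((1 - z ^ (S k)) / (1 - z)).

Lemma pe_diff z c M x : z <> 1 ->
  poly_eval c (S M) x - poly_eval c (S M) (z * x) = (1 - z) * x * poly_eval (qd z c) M x.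
Proof.
  intros Hz. induction M as [|M IH].
  - unfold poly_eval, qd; simpl. field. lra.
  - rewrite (pe_S c (S M)), (pe_S c (S M) (z*x)), (pe_S (qd z c) M).
    replace (poly_eval c (S M) x + c (S (S M)) * x ^ S (S M) -
      (poly_eval c (S M) (z * x) + c (S (S M)) * (z * x) ^ S (S M)))
      with ((poly_eval c (S M) x - poly_eval c (S M) (z * x)) + c (S (S M)) * (x ^ S (S M) - (z * x) ^ S (S M))) by ring.
    rewrite IH. unfold qd. rewrite Rpow_mult_distr. simpl. field. lra.
Qed.

Lemma pe_derive0 c M : is_derive (poly_eval c (S M)) 0 (c 1%nat).
Proof.
  induction M as [|M IH].
  - unfold poly_eval; simpl. auto_derive; auto. ring.
  - apply (is_derive_ext (fun x => poly_eval c (S M) x + c (S (S M)) * x ^ S (S M))).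
    { intro t; rewrite pe_S; reflexivity. }
    replace (c 1%nat) with (plus (c 1%nat) 0) by (unfold plus; simpl; ring).
    apply (is_derive_plus (poly_eval c (S M)) (fun x => c (S (S M)) * x ^ S (S M))); auto.
    auto_derive; auto. simpl. ring.
Qed.

Lemma pe_0 c n : poly_eval c n 0 = c 0%nat.
Proof. induction n; [unfold poly_eval; simpl; ring|]. rewrite pe_S, IHn. simpl. ring. Qed.

Lemma Dq_pe z c M : z <> 1 -> forall x,
  Dq z (poly_eval c (S M)) x = poly_eval (qd z c) M x.
Proof.
  intros Hz x. unfold Dq. destruct (Req_EM_T x 0) as [H0|H0].
  - rewrite (is_derive_unique _ _ _ (pe_derive0 c M)). subst.
    rewrite pe_0. unfold qd. simpl. field. lra.
  - rewrite pe_diff by auto. field. split; auto. lra.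
Qed.

Definition sg1 (s1 a1 b1 x : R) := s1 / 2 * (x - a1) * (x - b1).
Definition ta (t1 t0 x : R) := t1 * x + t0.
Definition sg2 (q s1 a1 b1 t1 t0 x : R) := q * (sg1 s1 a1 b1 x + (1 - / q) * x * ta t1 t0 x).
Definition Acf q s1 a1 b1 t1 t0 x := sg2 q s1 a1 b1 t1 t0 x / ((1 - q) ^ 2 * x ^ 2).
Definition Ccf q s1 a1 b1 x := q ^ 2 * sg1 s1 a1 b1 x / ((1 - q) ^ 2 * x ^ 2).
Definition Bcf q s1 a1 b1 t1 t0 x := - (Acf q s1 a1 b1 t1 t0 x + Ccf q s1 a1 b1 x).

Lemma three_term q s1 a1 b1 t1 t0 (y : R -> R) x : 0 < q < 1 -> x <> 0 ->
  sg1 s1 a1 b1 x * Dq (/ q) (Dq q y) x + ta t1 t0 x * Dq q y x =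
  Acf q s1 a1 b1 t1 t0 x * y (q * x) + Bcf q s1 a1 b1 t1 t0 x * y x + Ccf q s1 a1 b1 x * y (/ q * x).
Proof.
  intros Hq Hx. unfold Dq.
  destruct (Req_EM_T x 0) as [H|_]; [contradiction|].
  destruct (Req_EM_T (/ q * x) 0) as [H|_].
  { apply Rmult_integral in H. destruct H as [H|H]; [|contradiction].
    pose proof (Rinv_neq_0_compat q). lra. }
  replace (q * (/ q * x)) with x by (field; lra).
  unfold Bcf, Acf, Ccf, sg2, sg1, ta. field. repeat split; try lra; auto.
Qed.

Definition qn1 q (k : nat) := qnum q (Z.of_nat k).
Definition qn2 q (k : nat) := qnum (/ q) (Z.of_nat k - 1).
Definition bet q s1 a1 b1 t0 k := qn1 q k * (t0 - qn2 q k * (s1 / 2) * (a1 + b1)).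
Definition gam q s1 a1 b1 k := qn1 q k * qn2 q k * (s1 / 2) * (a1 * b1).

Lemma qn1_eq q k : qn1 q k = (1 - q ^ k) / (1 - q).
Proof. unfold qn1, qnum. rewrite <- pow_powerRZ. reflexivity. Qed.

Lemma qn2_eq q k : 0 < q -> qn2 q k = (1 - q / q ^ k) / (1 - / q).
Proof.
  intros Hq. unfold qn2, qnum. f_equal. f_equal.
  destruct k.
  - simpl. field. lra.
  - replace (Z.of_nat (S k) - 1)%Z with (Z.of_nat k) by lia.
    rewrite <- pow_powerRZ, pow_inv. simpl. field. split; [|lra]. apply pow_nonzero; lra.
Qed.

Lemma qnum1 q k : qnum q (Z.of_nat k) = (1 - q ^ k) / (1 - q).
Proof. apply qn1_eq. Qed.
Lemma qnum2 q k : 0 < q -> qnum (/ q) (Z.of_nat k - 1) = (1 - q / q ^ k) / (1 - / q).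
Proof. apply qn2_eq. Qed.

Lemma per_term q s1 a1 b1 t1 t0 n k x : 0 < q < 1 -> x <> 0 ->
  x ^ 2 * (Acf q s1 a1 b1 t1 t0 x * (q * x) ^ k + Bcf q s1 a1 b1 t1 t0 x * x ^ k
           + Ccf q s1 a1 b1 x * (/ q * x) ^ k + lambda_n q t1 s1 n * x ^ k)
  = (lambda_n q t1 s1 n - lambda_n q t1 s1 k) * x ^ k * x ^ 2
    + bet q s1 a1 b1 t0 k * x ^ k * x + gam q s1 a1 b1 k * x ^ k.
Proof.
  intros Hq Hx.
  unfold lambda_n, bet, gam, qn1, qn2.
  rewrite !qnum2 by lra. rewrite !qnum1.
  rewrite !Rpow_mult_distr, pow_inv.
  assert (q ^ k <> 0) by (apply pow_nonzero; lra).
  assert (q ^ n <> 0) by (apply pow_nonzero; lra).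
  unfold Bcf, Acf, Ccf, sg2, sg1, ta. field. repeat split; try lra; auto.
Qed.

Lemma sum_T (c L Bt G : nat -> R) Ln x M : Bt 0%nat = 0 -> G 0%nat = 0 -> G 1%nat = 0 ->
  sum_f_R0 (fun k => c k * ((Ln - L k) * x ^ k * x ^ 2 + Bt k * x ^ k * x + G k * x ^ k)) M
  = sum_f_R0 (fun i => (c i * (Ln - L i) + c (S i) * Bt (S i) + c (S (S i)) * G (S (S i))) * x ^ i * x ^ 2) M
    - c (S M) * Bt (S M) * x ^ (S M) * x - c (S M) * G (S M) * x ^ (S M)
    - c (S (S M)) * G (S (S M)) * x ^ (S M) * x.
Proof.
  intros HB0 HG0 HG1. induction M as [|M IH].
  - simpl. rewrite HB0, HG0, HG1. ring.
  - rewrite !tech5, IH. simpl. ring.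
Qed.

Lemma lin4 c n (A B C D u v w : R) :
  A * poly_eval c n u + B * poly_eval c n v + C * poly_eval c n w + D * poly_eval c n v
  = sum_f_R0 (fun k => c k * (A * u ^ k + B * v ^ k + C * w ^ k + D * v ^ k)) n.
Proof.
  induction n as [|n IH].
  - unfold poly_eval; simpl; ring.
  - rewrite !pe_S, tech5, <- IH. ring.
Qed.

Lemma sum_zero (f : nat -> R) n : (forall i, (i <= n)%nat -> f i = 0) -> sum_f_R0 f n = 0.
Proof.
  intros H; induction n as [|n IH]; simpl; [apply H; lia|].
  rewrite IH; [rewrite H by lia; ring|]. intros; apply H; lia.
Qed.

Lemma solves_from_rec q s1 a1 b1 t1 t0 n c :
  0 < q < 1 ->
  (forall k, (n < k)%nat -> c k = 0) ->
  (forall i, (i < n)%nat -> c i * (lambda_n q t1 s1 n - lambda_n q t1 s1 i)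
      + c (S i) * bet q s1 a1 b1 t0 (S i) + c (S (S i)) * gam q s1 a1 b1 (S (S i)) = 0) ->
  solves_qEHT q (fun x => s1 / 2 * (x - a1) * (x - b1)) (fun x => t1 * x + t0)
    (lambda_n q t1 s1 n) (poly_eval c n).
Proof.
  intros Hq Hc Hr.
  assert (Hr' : forall i, (i <= n)%nat -> c i * (lambda_n q t1 s1 n - lambda_n q t1 s1 i)
      + c (S i) * bet q s1 a1 b1 t0 (S i) + c (S (S i)) * gam q s1 a1 b1 (S (S i)) = 0).
  { intros i Hi. destruct (Nat.eq_dec i n) as [->|Hne]; [|apply Hr; lia].
    rewrite (Hc (S n)), (Hc (S (S n))) by lia. ring. }
  intro x.
  change (sg1 s1 a1 b1 x * Dq (/ q) (Dq q (poly_eval c n)) x + ta t1 t0 x * Dq q (poly_eval c n) x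
     + lambda_n q t1 s1 n * poly_eval c n x = 0).
  destruct (Req_EM_T x 0) as [H0|H0].
  - subst x.
    assert (E1 : poly_eval c n = poly_eval c (S n)).
    { apply functional_extensionality; intro t. symmetry; apply pe_deg; auto. }
    assert (E2 : Dq q (poly_eval c n) = poly_eval (qd q c) (S n)).
    { rewrite E1. apply functional_extensionality; intro t. rewrite Dq_pe by lra.
      symmetry; apply pe_deg; [|lia]. intros k Hk. unfold qd. rewrite (Hc (S k)) by lia. ring. }
    assert (Hiq : 1 < / q) by (rewrite <- Rinv_1; apply Rinv_lt_contravar; lra).
    rewrite E2, Dq_pe by lra.
    rewrite !pe_0.
    specialize (Hr' 0%nat ltac:(lia)).
    unfold qd, sg1, ta. clear Hr. unfold lambda_n, bet, gam, qn1, qn2 in *.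
    rewrite !qnum2 in * by lra. rewrite !qnum1 in *.
    assert (q ^ n <> 0) by (apply pow_nonzero; lra).
    simpl in *. etransitivity; [|exact Hr']. field. repeat split; lra.
  - rewrite three_term by auto.
    apply (Rmult_eq_reg_l (x ^ 2)); [|apply pow_nonzero; auto].
    rewrite Rmult_0_r.
    rewrite lin4, scal_sum.
    rewrite (sum_eq _ (fun k => c k * ((lambda_n q t1 s1 n - lambda_n q t1 s1 k) * x ^ k * x ^ 2
        + bet q s1 a1 b1 t0 k * x ^ k * x + gam q s1 a1 b1 k * x ^ k))).
    2: { intros k _. rewrite <- (per_term q s1 a1 b1 t1 t0 n k x) by auto. ring. }
    rewrite sum_T.
    + rewrite sum_zero. rewrite (Hc (S n)), (Hc (S (S n))) by lia. ring.
      intros i Hi. rewrite Hr' by auto. ring.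
    + unfold bet, qn1. rewrite qnum1. simpl. field. lra.
    + unfold gam, qn1. rewrite qnum1. simpl. field. lra.
    + unfold gam, qn1, qn2. rewrite qnum2 by lra. simpl. field. lra.
Qed.

Fixpoint fr (n : nat) (Ln : R) (L Bt G : nat -> R) (j : nat) : R * R :=
  match j with
  | O => (1, 0)
  | S j' => let p := fr n Ln L Bt G j' in
      (- (fst p * Bt (S (n - S j')) + snd p * G (S (S (n - S j')))) / (Ln - L (n - S j')%nat), fst p)
  end.

Definition cf n Ln L Bt G (i : nat) : R :=
  if Nat.leb i n then fst (fr n Ln L Bt G (n - i)) else 0.

Lemma cf_spec n Ln (L Bt G : nat -> R) :
  (forall i, (i < n)%nat -> Ln - L i <> 0) ->
  cf n Ln L Bt G n = 1 /\ (forall k, (n < k)%nat -> cf n Ln L Bt G k = 0) /\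
  (forall i, (i < n)%nat -> cf n Ln L Bt G i * (Ln - L i) + cf n Ln L Bt G (S i) * Bt (S i)
      + cf n Ln L Bt G (S (S i)) * G (S (S i)) = 0).
Proof.
  intros Hne. split; [|split].
  - unfold cf. rewrite Nat.leb_refl, Nat.sub_diag. reflexivity.
  - intros k Hk. unfold cf. destruct (Nat.leb_spec k n); [lia|reflexivity].
  - intros i Hi.
    assert (E : (n - i = S (n - S i))%nat) by lia.
    assert (Ei : (n - S (n - S i) = i)%nat) by lia.
    unfold cf at 1. destruct (Nat.leb_spec i n); [|lia]. rewrite E. simpl fr. rewrite Ei.
    unfold cf. destruct (Nat.leb_spec (S i) n); [|lia].
    destruct (Nat.leb_spec (S (S i)) n).
    + assert (E2 : (n - S i = S (n - S (S i)))%nat) by lia.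
      set (p := fr n Ln L Bt G (n - S i)).
      assert (Hsnd : snd p = fst (fr n Ln L Bt G (n - S (S i)))).
      { unfold p. rewrite E2. reflexivity. }
      rewrite <- Hsnd. simpl. field. apply Hne; auto.
    + assert (E2 : (n - S i = 0)%nat) by lia.
      rewrite E2. simpl. field. apply Hne; auto.
Qed.

Lemma pow_inj_lt1 q n m : 0 < q < 1 -> n <> m -> q ^ n <> q ^ m.
Proof.
  intros Hq Hnm.
  assert (H : forall a b, (a < b)%nat -> q ^ b < q ^ a).
  { intros a b Hab. replace b with (a + (b - a))%nat by lia. rewrite pow_add.
    pose proof (pow_lt_1_compat q (b - a) ltac:(lra) ltac:(lia)).
    pose proof (pow_lt q a ltac:(lra)). nra. }
  destruct (Nat.lt_gt_cases n m) as [[Hl|Hl] _]; [lia| |]; intro E.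
  - specialize (H n m Hl). lra.
  - specialize (H m n Hl). lra.
Qed.

Lemma lam_inj q t1 s1 n m : 0 < q < 1 -> s1 <> 0 ->
  q ^ 2 * (/ q ^ 2 * (1 + (1 - / q) * t1 / (s1 / 2))) < 0 -> n <> m ->
  lambda_n q t1 s1 n <> lambda_n q t1 s1 m.
Proof.
  intros Hq Hs Hl Hnm.
  pose proof (pow_inj_lt1 q n m Hq Hnm) as Huv.
  set (r := t1 / (s1 / 2)).
  assert (Ht : t1 = r * (s1 / 2)) by (unfold r; field; auto).
  assert (Hr : q < (1 - q) * r).
  { replace (q ^ 2 * (/ q ^ 2 * (1 + (1 - / q) * t1 / (s1 / 2)))) with (1 + (1 - / q) * r) in Hl
      by (unfold r; field; split; auto; lra).
    apply (Rmult_lt_compat_l q) in Hl; [|lra].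
    replace (q * (1 + (1 - / q) * r)) with (q - (1 - q) * r) in Hl by (field; lra). lra. }
  unfold lambda_n. rewrite !qnum2 by lra. rewrite !qnum1.
  pose proof (pow_lt q n ltac:(lra)). pose proof (pow_lt q m ltac:(lra)).
  set (u := q ^ n) in *. set (v := q ^ m) in *.
  intro E.
  assert (Id : (u - v) * (s1 / 2) * (q ^ 2 / (1 - q) + u * v * (r - q / (1 - q))) = 0).
  { transitivity ((- ((1 - u) / (1 - q)) * (t1 + / 2 * ((1 - q / u) / (1 - / q)) * s1) -
     - ((1 - v) / (1 - q)) * (t1 + / 2 * ((1 - q / v) / (1 - / q)) * s1)) * (1 - q) * u * v).
    - rewrite Ht. field. repeat split; lra.
    - rewrite E. ring. }
  assert (0 < q ^ 2 / (1 - q)) by (apply Rdiv_lt_0_compat; nra).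
  assert (0 < r - q / (1 - q)).
  { apply (Rmult_lt_reg_l (1 - q)); [lra|]. replace ((1 - q) * (r - q / (1 - q))) with ((1-q)*r - q) by (field; lra). lra. }
  assert (0 < u * v * (r - q / (1 - q))) by (apply Rmult_lt_0_compat; [nra|lra]).
  apply Rmult_integral in Id. destruct Id as [Id|Id]; [|lra].
  apply Rmult_integral in Id. destruct Id as [Id|Id]; lra.
Qed.

Lemma pe_shift c m x : poly_eval c (S m) x = c 0%nat + x * poly_eval (fun k => c (S k)) m x.
Proof.
  induction m as [|m IH].
  - unfold poly_eval; simpl; ring.
  - rewrite pe_S, IH, pe_S. simpl. ring.
Qed.

Lemma pe_lin a b r m x : poly_eval (fun k => a k + r * b k) m x = poly_eval a m x + r * poly_eval b m x.
Proof.
  induction m as [|m IH]; [unfold poly_eval; simpl; ring|].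
  rewrite !pe_S, IH. ring.
Qed.

Lemma pe_ext a b m x : (forall k, (k <= m)%nat -> a k = b k) -> poly_eval a m x = poly_eval b m x.
Proof.
  intros H. induction m as [|m IH]; [unfold poly_eval; simpl; rewrite H by lia; ring|].
  rewrite !pe_S, IH; [rewrite (H (S m)) by lia; ring|]. intros; apply H; lia.
Qed.

Lemma div_lin n : forall c r, exists d, d n = c (S n) /\
  forall x, poly_eval c (S n) x - poly_eval c (S n) r = (x - r) * poly_eval d n x.
Proof.
  induction n as [|n IH]; intros c r.
  - exists (fun _ => c 1%nat). split; auto. intro x. unfold poly_eval; simpl. ring.
  - destruct (IH (fun k => c (S k)) r) as [d' [Hd' Hd]].
    exists (fun k => c (S k) + r * (if Nat.leb k n then d' k else 0)).
    split.
    + cbv beta. rewrite (proj2 (Nat.leb_gt (S n) n) ltac:(lia)). ring.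
    + intro x. rewrite !(pe_shift c (S n)), pe_lin.
      assert (E : forall y, poly_eval (fun k => if Nat.leb k n then d' k else 0) (S n) y = poly_eval d' n y).
      { intro y. rewrite pe_S. rewrite (proj2 (Nat.leb_gt (S n) n) ltac:(lia)).
        rewrite (pe_ext _ d'). ring. intros k Hk. destruct (Nat.leb_spec k n); [auto|lia]. }
      rewrite E. specialize (Hd x).
      set (Ex := poly_eval (fun k => c (S k)) (S n) x) in *.
      set (Er := poly_eval (fun k => c (S k)) (S n) r) in *.
      replace (c 0%nat + x * Ex - (c 0%nat + r * Er)) with ((x - r) * Ex + r * (Ex - Er)) by ring.
      rewrite Hd. ring.
Qed.

Lemma no_many_roots n : forall c (pts : nat -> R), c n <> 0 ->
  (forall i j, (i <= n)%nat -> (j <= n)%nat -> i <> j -> pts i <> pts j) ->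
  (forall i, (i <= n)%nat -> poly_eval c n (pts i) = 0) -> False.
Proof.
  induction n as [|n IH]; intros c pts Hc Hd Hr.
  - specialize (Hr 0%nat (le_n 0)). unfold poly_eval in Hr; simpl in Hr. apply Hc. lra.
  - destruct (div_lin n c (pts (S n))) as [d [Hdn Hdiv]].
    apply (IH d pts).
    + rewrite Hdn; auto.
    + intros i j Hi Hj; apply Hd; lia.
    + intros i Hi. specialize (Hdiv (pts i)).
      rewrite (Hr i), (Hr (S n)) in Hdiv by lia.
      assert (pts i - pts (S n) <> 0) by (specialize (Hd i (S n) ltac:(lia) ltac:(lia) ltac:(lia)); lra).
      apply (Rmult_eq_reg_l (pts i - pts (S n))); auto. lra.
Qed.

Lemma green (q : R) (xs : nat -> R) (f g : R -> R) (W : nat -> R) (A B C : R -> R) (N : nat) (ln lm : R) :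
  (forall k, xs (S k) = / q * xs k) -> (forall k, q * xs (S k) = xs k) ->
  (forall k, (k <= N)%nat -> A (xs k) * f (q * xs k) + B (xs k) * f (xs k) + C (xs k) * f (/ q * xs k) = - ln * f (xs k)) ->
  (forall k, (k <= N)%nat -> A (xs k) * g (q * xs k) + B (xs k) * g (xs k) + C (xs k) * g (/ q * xs k) = - lm * g (xs k)) ->
  A (xs 0%nat) = 0 -> C (xs N) = 0 ->
  (forall k, (k < N)%nat -> W k * C (xs k) = W (S k) * A (xs (S k))) ->
  (lm - ln) * sum_f_R0 (fun k => W k * f (xs k) * g (xs k)) N = 0.
Proof.
  intros Hup Hdn Hf Hg HA0 HCN HP.
  set (Lf := fun k => A (xs k) * f (q * xs k) + B (xs k) * f (xs k) + C (xs k) * f (/ q * xs k)).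
  set (Lg := fun k => A (xs k) * g (q * xs k) + B (xs k) * g (xs k) + C (xs k) * g (/ q * xs k)).
  set (T := fun k => W k * C (xs k) * (f (xs (S k)) * g (xs k) - f (xs k) * g (xs (S k)))).
  assert (Htel : forall M, (M <= N)%nat ->
    sum_f_R0 (fun k => W k * (Lf k * g (xs k) - f (xs k) * Lg k)) M = T M).
  { induction M as [|M IH]; intros HM.
    - simpl. unfold Lf, Lg, T. rewrite HA0, Hup. ring.
    - rewrite tech5, IH by lia. unfold Lf, Lg, T.
      rewrite (Hdn M). rewrite <- !Hup.
      apply Rminus_diag_uniq.
      transitivity ((W M * C (xs M) - W (S M) * A (xs (S M))) *
         (f (xs (S M)) * g (xs M) - f (xs M) * g (xs (S M)))).
      + ring.
      + rewrite (HP M) by lia. ring. }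
  specialize (Htel N (le_n N)). unfold T in Htel. rewrite HCN in Htel.
  rewrite scal_sum.
  rewrite <- (sum_eq (fun k => W k * (Lf k * g (xs k) - f (xs k) * Lg k))).
  - rewrite Htel. ring.
  - intros k Hk. unfold Lf, Lg. rewrite Hf, Hg by auto. ring.
Qed.

Lemma cpow_step q x kap (iota : CC) : 0 < q -> 0 < x -> 0 < kap ->
  cpow_abs q iota = RtoC kap ->
  cpow_abs (/ q * x) iota = Cmult (cpow_abs x iota) (RtoC (/ kap)).
Proof.
  intros Hq Hx Hk H.
  destruct iota as [ir ii].
  unfold cpow_abs, Cmult, RtoC, Re, Im in *; simpl in *.
  rewrite Rabs_pos_eq in H by lra.
  injection H as H1 H2.
  set (E := exp (ir * ln q)) in *. set (th := ii * ln q) in *.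
  assert (HE : 0 < E) by apply exp_pos.
  assert (Hs : sin th = 0) by nra.
  assert (Hc : cos th = 1).
  { pose proof (sin2_cos2 th) as P. unfold Rsqr in P. rewrite Hs in P.
    assert (0 < cos th) by nra. nra. }
  assert (HEk : E = kap) by (rewrite Hc in H1; lra).
  rewrite !Rabs_pos_eq by (try apply Rmult_le_pos; try left; try apply Rinv_0_lt_compat; lra).
  rewrite ln_mult, ln_Rinv by (try apply Rinv_0_lt_compat; lra).
  replace (ii * (- ln q + ln x)) with (ii * ln x - th) by (unfold th; ring).
  replace (ir * (- ln q + ln x)) with (ir * ln x + - (ir * ln q)) by ring.
  rewrite exp_plus, exp_Ropp. fold E. rewrite cos_minus, sin_minus, Hs, Hc, HEk.
  f_equal; field; lra.
Qed.

Definition Rr q a b a1 a2 (y : R) :=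
  qpoch_inf (q * a / y) q * qpoch_inf (y / b) q / (qpoch_inf (a1 / y) q * qpoch_inf (y / a2) q).

Lemma pearson q s1 a1 b1 t1 t0 s2 a2 b2 b kap x :
  0 < q < 1 -> s1 <> 0 -> s2 <> 0 -> a2 < 0 -> 0 < a1 -> 0 < b2 -> 0 < b -> b1 = q * b ->
  kap = / q ^ 3 * s2 * a2 / (s1 * b) ->
  (forall y, sg2 q s1 a1 b1 t1 t0 y = s2 / 2 * (y - a2) * (y - b2)) ->
  0 < x -> b2 / x < 1 -> x / b < 1 -> a1 / (q * x) < 1 ->
  Rr q b2 b a1 a2 (q * x) * Ccf q s1 a1 b1 (q * x) = / q * / kap * Rr q b2 b a1 a2 x * Acf q s1 a1 b1 t1 t0 x.
Proof.
  intros Hq Hs1 Hs2 Ha2 Ha1 Hb2 Hb Hb1 Hk Hsig Hx H1 H2 H3.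
  unfold Rr, Acf, Ccf. rewrite Hsig.
  assert (E1 : qpoch_inf (q * b2 / (q * x)) q = (1 - b2 / x) * qpoch_inf (q * b2 / x) q).
  { replace (q * b2 / (q * x)) with (b2 / x) by (field; lra).
    rewrite (qp_fun (b2 / x)) by auto. f_equal. f_equal. field. lra. }
  assert (E2 : qpoch_inf (x / b) q = (1 - x / b) * qpoch_inf (q * x / b) q).
  { rewrite (qp_fun (x / b)) by auto. f_equal. f_equal. field. lra. }
  assert (E3 : qpoch_inf (a1 / (q * x)) q = (1 - a1 / (q * x)) * qpoch_inf (a1 / x) q).
  { rewrite (qp_fun (a1 / (q * x))) by auto. f_equal. f_equal. field. lra. }
  assert (E4 : qpoch_inf (x / a2) q = (1 - x / a2) * qpoch_inf (q * x / a2) q).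
  { assert (/ a2 < 0) by (apply Rinv_lt_0_compat; lra).
    assert (x / a2 < 1) by (unfold Rdiv; nra).
    rewrite (qp_fun (x / a2)) by auto.
    f_equal. f_equal. field. lra. }
  rewrite E1, E2, E3, E4.
  assert (/ a2 < 0) by (apply Rinv_lt_0_compat; lra).
  assert (x / a2 < 1) by (unfold Rdiv; nra).
  assert (a1 / x < 1).
  { apply Rle_lt_trans with (a1 / (q * x)); auto. unfold Rdiv. apply Rmult_le_compat_l; [lra|].
    apply Rinv_le_contravar; nra. }
  assert (qq : q * x / a2 < 1).
  { assert (0 < q * x) by nra. unfold Rdiv. nra. }
  pose proof (qp_pos (q * b2 / x) q Hq) as P1.
  pose proof (qp_pos (q * x / b) q Hq) as P2.
  pose proof (qp_pos (a1 / x) q Hq) as P3.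
  pose proof (qp_pos (q * x / a2) q Hq qq) as P4.
  assert (q * x / b < 1).
  { apply Rle_lt_trans with (x / b); auto. unfold Rdiv. apply Rmult_le_compat_r.
    left; apply Rinv_0_lt_compat; lra. nra. }
  assert (q * b2 / x < 1).
  { apply Rle_lt_trans with (b2 / x); auto. unfold Rdiv. 
    rewrite Rmult_assoc. assert (0 <= b2 * / x) by (apply Rmult_le_pos; [lra| left; apply Rinv_0_lt_compat; lra]). nra. }
  specialize (P1 ltac:(auto)). specialize (P2 ltac:(auto)). specialize (P3 ltac:(auto)).
  rewrite Hk, Hb1. unfold sg1.
  assert (1 - a1 / (q * x) <> 0) by lra. assert (1 - x / a2 <> 0) by lra.
  assert (q * x - a1 <> 0).
  { assert (0 < q * x) by nra. intro E. apply H7. replace a1 with (q*x) by lra. field. lra. }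
  field. repeat split; try lra.
Qed.

Lemma csum_ext (f g : nat -> CC) N : (forall k, (k <= N)%nat -> f k = g k) -> csum f N = csum g N.
Proof.
  intros H; induction N as [|N IH]; simpl; [apply H; lia|].
  rewrite IH; [rewrite H by lia; auto|]. intros; apply H; lia.
Qed.

Lemma csum_scal (z : CC) (h : nat -> R) N :
  csum (fun k => Cmult z (RtoC (h k))) N = Cmult z (RtoC (sum_f_R0 h N)).
Proof.
  induction N as [|N IH]; simpl; auto.
  rewrite IH. destruct z as [u v]. unfold Cmult, Cplus, RtoC; simpl. f_equal; ring.
Qed.

Lemma cnz (c K : R) x (iota : CC) : c <> 0 -> K <> 0 ->
  Cmult (RtoC c) (Cmult (cpow_abs x iota) (RtoC K)) <> RtoC 0.
Proof.
  intros Hc HK E. destruct iota as [ir ii].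
  unfold cpow_abs, Cmult, RtoC, Re, Im in E; simpl in E.
  injection E as E1 E2.
  set (e := exp (ir * ln (Rabs x))) in *. set (t := ii * ln (Rabs x)) in *.
  assert (0 < e) by apply exp_pos.
  pose proof (sin2_cos2 t) as P. unfold Rsqr in P.
  assert (Hm : c * e * K <> 0).
  { apply Rmult_integral_contrapositive; split; [|auto].
    apply Rmult_integral_contrapositive; split; lra. }
  assert (cos t = 0).
  { apply (Rmult_eq_reg_l (c * e * K)); auto. rewrite Rmult_0_r. rewrite <- E1. ring. }
  assert (sin t = 0).
  { apply (Rmult_eq_reg_l (c * e * K)); auto. rewrite Rmult_0_r. rewrite <- E2. ring. }
  nra.
Qed.

Lemma czero (c : R) (z : CC) : Cmult (RtoC c) (Cmult z (RtoC 0)) = RtoC 0.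
Proof. destruct z as [u v]. unfold Cmult, RtoC; simpl. f_equal; ring. Qed.

Lemma sum_nonneg_zero (f : nat -> R) N : (forall k, (k <= N)%nat -> 0 <= f k) ->
  sum_f_R0 f N = 0 -> forall k, (k <= N)%nat -> f k = 0.
Proof.
  induction N as [|N IH]; intros Hp Hs k Hk.
  - simpl in Hs. replace k with 0%nat by lia. auto.
  - simpl in Hs.
    assert (Hpos : forall M, (M <= N)%nat -> 0 <= sum_f_R0 f M).
    { induction M; intros HM; simpl; [apply Hp; lia|]. pose proof (Hp (S M) ltac:(lia)). pose proof (IHM ltac:(lia)). lra. }
    pose proof (Hpos N (le_n N)). pose proof (Hp (S N) (le_n _)).
    destruct (Nat.eq_dec k (S N)) as [->|Hne]; [lra|].
    apply IH; [intros; apply Hp; lia| lra | lia].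
Qed.

Theorem theorem4p8 (q s1 a1 b1 t1 t0 s2 a2 b2 : R) (N : nat) (iota : CC) :
  0 < q < 1 ->
  s1 <> 0 ->
  t1 <> 0 ->
  let sigma1 := fun x : R => s1 / 2 * (x - a1) * (x - b1) in
  let tau := fun x : R => t1 * x + t0 in
  let sigma2 := fun x : R => q * (sigma1 x + (1 - / q) * x * tau x) in
  (forall x : R, sigma2 x = s2 / 2 * (x - a2) * (x - b2)) ->
  s2 <> 0 ->
  a2 < 0 < a1 -> a1 < b2 < b1 ->
  let Lambda := / q ^ 2 * (1 + (1 - / q) * t1 / (s1 / 2)) in
  q ^ 2 * Lambda < 0 ->
  let a := b2 in
  let b := / q * b1 in
  / q ^ (N + 1) * a = b ->
  cpow_abs q iota = RtoC (/ q ^ 3 * s2 * a2 / (s1 * b)) ->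
  let rho := fun x : R =>
    Cmult (cpow_abs x iota)
      (RtoC (qpoch_inf (q * a / x) q * qpoch_inf (x / b) q
             / (qpoch_inf (a1 / x) q * qpoch_inf (x / a2) q))) in
  exists (P : nat -> nat -> R) (d : nat -> CC),
    (forall n : nat, (n <= N)%nat ->
       has_degree (P n) n /\
       solves_qEHT q sigma1 tau (lambda_n q t1 s1 n) (poly_eval (P n) n)) /\
    (forall n : nat, (n <= N)%nat -> d n <> RtoC 0) /\
    (forall m n : nat, (m <= N)%nat -> (n <= N)%nat ->
       qint_inv q a N (fun x => Cmult (RtoC (poly_eval (P n) n x * poly_eval (P m) m x)) (rho x))
       = (if Nat.eqb m n then d n else RtoC 0)).
Proof.
  intros Hq Hs1 Ht1 sigma1 tau sigma2 Hsig2 Hs2 [Ha2 Ha1] [Hab2 Hb21] Lambda HL a b Hab Hio rho.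
  assert (Hiq : 1 < / q) by (rewrite <- Rinv_1; apply Rinv_lt_contravar; lra).
  assert (Hb2 : 0 < b2) by lra.
  assert (Hbpos : 0 < b) by (unfold b; apply Rmult_lt_0_compat; [apply Rinv_0_lt_compat|]; lra).
  assert (Hb1 : b1 = q * b) by (unfold b; field; lra).
  set (X := 1 + (1 - / q) * t1 / (s1 / 2)).
  assert (HX : X < 0).
  { unfold Lambda in HL. replace (q ^ 2 * (/ q ^ 2 * (1 + (1 - / q) * t1 / (s1 / 2)))) with X in HL; auto.
    unfold X. field. lra. }
  assert (Hs2e : s2 = q * s1 * X).
  { pose proof (Hsig2 0) as H0. pose proof (Hsig2 1) as H1. pose proof (Hsig2 (-1)) as H2.
    unfold sigma2, sigma1, tau in H0, H1, H2.
    transitivity (s2 / 2 * (1 - a2) * (1 - b2) + s2 / 2 * (-1 - a2) * (-1 - b2) - 2 * (s2 / 2 * (0 - a2) * (0 - b2))).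
    - field.
    - rewrite <- H0, <- H1, <- H2. unfold X. field. lra. }
  set (kap := / q ^ 3 * s2 * a2 / (s1 * b)).
  assert (Hkap : 0 < kap).
  { replace kap with (X * a2 / (q ^ 2 * b)) by (unfold kap; rewrite Hs2e; field; repeat split; lra).
    apply Rdiv_lt_0_compat; [nra|]. apply Rmult_lt_0_compat; [apply pow_lt|]; lra. }
  set (xs := fun k : nat => / q ^ k * b2).
  assert (Hup : forall k, xs (S k) = / q * xs k).
  { intro k. unfold xs. simpl. rewrite Rinv_mult. ring. }
  assert (Hdn : forall k, q * xs (S k) = xs k).
  { intro k. rewrite Hup. field. lra. }
  assert (Hxs0 : xs 0%nat = b2) by (unfold xs; simpl; rewrite Rinv_1; ring).
  assert (Hxpos : forall k, 0 < xs k).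
  { intro k; unfold xs. apply Rmult_lt_0_compat; [apply Rinv_0_lt_compat, pow_lt|]; lra. }
  assert (Hxinc : forall k, xs k < xs (S k)).
  { intro k. rewrite Hup. pose proof (Hxpos k). nra. }
  assert (Hxmono : forall i j, (i < j)%nat -> xs i < xs j).
  { intros i j Hij. induction Hij; [apply Hxinc|]. pose proof (Hxinc m). lra. }
  assert (Hxle : forall i j, (i <= j)%nat -> xs i <= xs j).
  { intros i j Hij. destruct (Nat.eq_dec i j) as [->|]; [lra|]. left; apply Hxmono; lia. }
  assert (HxN : xs N = b1).
  { assert (xs (S N) = / q * b1). { unfold xs. rewrite <- Nat.add_1_r. exact Hab. }
    rewrite Hup in H. apply (Rmult_eq_reg_l (/ q)); auto. apply Rinv_neq_0_compat; lra. }
  set (P := fun n : nat => cf n (lambda_n q t1 s1 n) (lambda_n q t1 s1) (bet q s1 a1 b1 t0) (gam q s1 a1 b1)).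
  assert (HP : forall n, (P n n = 1) /\ (forall k, (n < k)%nat -> P n k = 0) /\
    (forall i, (i < n)%nat -> P n i * (lambda_n q t1 s1 n - lambda_n q t1 s1 i) + P n (S i) * bet q s1 a1 b1 t0 (S i)
      + P n (S (S i)) * gam q s1 a1 b1 (S (S i)) = 0)).
  { intro n. apply cf_spec. intros i Hi. apply Rminus_eq_contra. apply lam_inj; auto; lia. }
  assert (Hsol : forall n, solves_qEHT q sigma1 tau (lambda_n q t1 s1 n) (poly_eval (P n) n)).
  { intro n. destruct (HP n) as [_ [Hz Hr]]. apply solves_from_rec; auto. }
  set (W := fun k : nat => / q ^ k * (/ kap) ^ k * Rr q b2 b a1 a2 (xs k)).
  assert (HWpos : forall k, (k <= N)%nat -> 0 < W k).
  { intros k Hk. unfold W. apply Rmult_lt_0_compat; [apply Rmult_lt_0_compat|].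
    - apply Rinv_0_lt_compat, pow_lt; lra.
    - apply pow_lt, Rinv_0_lt_compat; lra.
    - unfold Rr. pose proof (Hxpos k). pose proof (Hxle 0%nat k ltac:(lia)). pose proof (Hxle k N Hk).
      rewrite Hxs0 in *. rewrite HxN in *.
      assert (/ a2 < 0) by (apply Rinv_lt_0_compat; lra).
      apply Rdiv_lt_0_compat; apply Rmult_lt_0_compat; apply qp_pos; auto.
      + apply (Rmult_lt_reg_r (xs k)); auto. unfold Rdiv. rewrite Rmult_assoc, Rinv_l by lra. nra.
      + apply (Rmult_lt_reg_r b); auto. unfold Rdiv. rewrite Rmult_assoc, Rinv_l by lra. nra.
      + apply (Rmult_lt_reg_r (xs k)); auto. unfold Rdiv. rewrite Rmult_assoc, Rinv_l by lra. nra.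
      + unfold Rdiv. nra. }
  assert (Hcp : forall k, cpow_abs (xs k) iota = Cmult (cpow_abs b2 iota) (RtoC ((/ kap) ^ k))).
  { induction k as [|k IH].
    - rewrite Hxs0. destruct (cpow_abs b2 iota) as [u v]. unfold Cmult, RtoC; simpl. f_equal; ring.
    - rewrite Hup, (cpow_step q (xs k) kap iota) by (auto; lra).
      rewrite IH. destruct (cpow_abs b2 iota) as [u v]. unfold Cmult, RtoC; simpl. f_equal; ring. }
  assert (Hqint : forall p : R -> R,
    qint_inv q a N (fun x => Cmult (RtoC (p x)) (rho x)) =
    Cmult (RtoC ((/ q - 1) * b2)) (Cmult (cpow_abs b2 iota) (RtoC (sum_f_R0 (fun k => W k * p (xs k)) N)))).
  { intro p. unfold qint_inv. f_equal. rewrite <- csum_scal. apply csum_ext. intros k Hk.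
    change (/ q ^ k * a) with (xs k). unfold rho. change (q * a / xs k) with (q * b2 / xs k).
    fold (Rr q b2 b a1 a2 (xs k)). rewrite Hcp.
    unfold W. destruct (cpow_abs b2 iota) as [u v]. unfold Cmult, RtoC; simpl. f_equal; ring. }
  set (d := fun n : nat => Cmult (RtoC ((/ q - 1) * b2)) (Cmult (cpow_abs b2 iota)
     (RtoC (sum_f_R0 (fun k => W k * (poly_eval (P n) n (xs k) * poly_eval (P n) n (xs k))) N)))).
  exists P, d. split; [|split].
  - intros n Hn. split; [|apply Hsol]. destruct (HP n) as [H1 [H2 _]]. split; [rewrite H1; lra| auto].
  - intros n Hn. unfold d. apply cnz.
    + assert (0 < / q - 1) by lra. nra.
    + intro E. destruct (HP n) as [H1 _].
      apply (no_many_roots n (P n) xs); [rewrite H1; lra| |].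
      * intros i j Hi Hj Hij. destruct (Nat.lt_gt_cases i j) as [[Hl|Hl] _]; auto.
        -- apply Rlt_not_eq, Hxmono; auto.
        -- apply Rgt_not_eq, Hxmono; auto.
      * intros i Hi. pose proof (sum_nonneg_zero (fun k => W k * (poly_eval (P n) n (xs k) * poly_eval (P n) n (xs k))) N) as Z.
        cbv beta in Z. specialize (Z ltac:(intros k Hk; pose proof (HWpos k Hk);
           apply Rmult_le_pos; [lra| apply Rle_0_sqr]) E i ltac:(lia)).
        pose proof (HWpos i ltac:(lia)).
        apply Rmult_integral in Z. destruct Z as [Z|Z]; [lra|]. apply Rmult_integral in Z. tauto.
  - intros m n Hm Hn.
    pose proof (Hqint (fun x => poly_eval (P n) n x * poly_eval (P m) m x)) as E. cbv beta in E.
    rewrite E. destruct (Nat.eqb_spec m n) as [->|Hne]; [reflexivity|].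
    assert (Hsig2' : forall y, sg2 q s1 a1 b1 t1 t0 y = s2 / 2 * (y - a2) * (y - b2)) by exact Hsig2.
    assert (Hxnz : forall k, xs k <> 0) by (intro k; pose proof (Hxpos k); lra).
    assert (Hrec : forall j (Hj : (j <= N)%nat) k, (k <= N)%nat ->
       Acf q s1 a1 b1 t1 t0 (xs k) * poly_eval (P j) j (q * xs k) + Bcf q s1 a1 b1 t1 t0 (xs k) * poly_eval (P j) j (xs k)
       + Ccf q s1 a1 b1 (xs k) * poly_eval (P j) j (/ q * xs k) = - lambda_n q t1 s1 j * poly_eval (P j) j (xs k)).
    { intros j Hj k Hk. pose proof (Hsol j (xs k)) as H.
      change (sg1 s1 a1 b1 (xs k) * Dq (/ q) (Dq q (poly_eval (P j) j)) (xs k) + ta t1 t0 (xs k) * Dq q (poly_eval (P j) j) (xs k)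
        + lambda_n q t1 s1 j * poly_eval (P j) j (xs k) = 0) in H.
      rewrite three_term in H by auto. lra. }
    assert (HA0 : Acf q s1 a1 b1 t1 t0 (xs 0%nat) = 0).
    { unfold Acf. rewrite Hxs0, Hsig2'. unfold Rdiv. ring. }
    assert (HCN : Ccf q s1 a1 b1 (xs N) = 0).
    { unfold Ccf. rewrite HxN. unfold sg1, Rdiv. ring. }
    assert (HPe : forall k, (k < N)%nat -> W k * Ccf q s1 a1 b1 (xs k) = W (S k) * Acf q s1 a1 b1 t1 t0 (xs (S k))).
    { intros k Hk. unfold W. rewrite <- (Hdn k).
      assert (F1 : b2 < xs (S k)) by (pose proof (Hxinc k); pose proof (Hxle 0%nat k ltac:(lia)); rewrite Hxs0 in *; lra).
      assert (F2 : xs (S k) < b) by (pose proof (Hxle (S k) N Hk); rewrite HxN in *; nra).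
      assert (F3 : a1 < q * xs (S k)) by (rewrite Hdn; pose proof (Hxle 0%nat k ltac:(lia)); rewrite Hxs0 in *; lra).
      pose proof (Hxpos (S k)).
      assert (ltd : forall u v, 0 < v -> u < v -> u / v < 1).
      { intros u v Hv Huv. apply (Rmult_lt_reg_r v); auto. unfold Rdiv. rewrite Rmult_assoc, Rinv_l by lra. lra. }
      rewrite Rmult_assoc, (pearson q s1 a1 b1 t1 t0 s2 a2 b2 b kap (xs (S k))); auto; try lra;
        try (apply ltd; nra).
      simpl. rewrite Rinv_mult. field. repeat split; try lra. apply pow_nonzero; lra. }
    pose proof (green q xs (poly_eval (P n) n) (poly_eval (P m) m) W (Acf q s1 a1 b1 t1 t0) (Bcf q s1 a1 b1 t1 t0)
      (Ccf q s1 a1 b1) N (lambda_n q t1 s1 n) (lambda_n q t1 s1 m) Hup Hdn (Hrec n Hn) (Hrec m Hm) HA0 HCN HPe) as G.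
    apply Rmult_integral in G. destruct G as [G|G].
    { exfalso. apply (lam_inj q t1 s1 m n); auto. lra. }
    rewrite (sum_eq _ (fun k => W k * poly_eval (P n) n (xs k) * poly_eval (P m) m (xs k))) by (intros; ring).
    rewrite G. apply czero.
Qed.
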